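(* Let $n\in\mathbb{N}$, let $c=(c_{i,j})$ be an $n\times(n+1)$ matrix with entries in $\{0,1\}$ such that every row and every column contains at least one entry equal to $1$, let $\sigma_1,\ldots,\sigma_n>0$, $\gamma_1,\ldots,\gamma_{n+1}>0$ with $\gamma^\ast=\gamma_1+\cdots+\gamma_{n+1}>1$. Let $\mathbf{X}=(X_1,\ldots,X_n)'$ have decumulative distribution function \[ \mathbf{P}[X_1>x_1,\ldots,X_n>x_n]=\prod_{j=1}^{n+1}\left(1+\sum_{i=1}^n\frac{c_{i,j}}{\sigma_i}x_i\right)^{-\gamma_j},\quad (x_1,\ldots,x_n)'\in(0,\infty)^n, \] and $X_-=\min_{1\le i\le n}X_i$. For $j=1,\ldots,n+1$ put $\alpha_j=\left(\sum_{i=1}^nc_{i,j}/\sigma_i\right)^{-1}$ and $\alpha_+(\boldsymbol{\sigma})=\max_{1\le j\le n+1}\alpha_j$. Let $K$ be a nonnegative integer-valued random variable with $p_k=\mathbf{P}[K=k]=c_+\delta_k$, $k=0,1,\ldots$, where $c_+=\prod_{j=1}^{n+1}(\alpha_j/\alpha_+(\boldsymbol{\sigma}))^{\gamma_j}$, $\delta_0=1$ and $\delta_k=k^{-1}\sum_{l=1}^k\sum_{j=1}^{n+1}\gamma_j(1-\alpha_j/\alpha_+(\boldsymbol{\sigma}))^l\delta_{k-l}$ for $k>0$. Then $X_-\sim Pa(II)(\alpha_+(\boldsymbol{\sigma}),\gamma^\ast+K)$, i.e. \[ \mathbf{P}[X_->x]=\sum_{k=0}^\infty p_k\left(1+\frac{x}{\alpha_+(\boldsymbol{\sigma})}\right)^{-(\gamma^\ast+k)},\quad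 x>0. \]
   Context: $Pa(II)(\sigma,\alpha)$ is the Pareto distribution of the 2nd kind with decumulative distribution function $(1+x/\sigma)^{-\alpha}$, $x>0$; with a random tail index $\gamma^\ast+K$ it denotes the corresponding mixture over the law of $K$. *)

(* Defs.v *)
From HB Require Import structures.
From mathcomp Require Import all_boot all_order all_algebra.
From mathcomp Require Import all_classical all_reals all_analysis.
Set Implicit Arguments. Unset Strict Implicit. Unset Printing Implicit Defensive.
Import Order.TTheory GRing.Theory Num.Theory.
Local Open Scope ring_scope.

Definition alpha (R : realType) (n : nat) (c : 'M[R]_(n, n.+1))
  (sigma : 'I_n -> R) (j : 'I_n.+1) : R :=
  (\sum_(i < n) c i j / sigma i)^-1.

(* alpha_+(sigma) = max_j alpha_j  (all alpha_j > 0, so 0 is a neutral start) *)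
Definition alpha_plus (R : realType) (n : nat) (c : 'M[R]_(n, n.+1))
  (sigma : 'I_n -> R) : R :=
  \big[Num.max/0]_(j < n.+1) alpha c sigma j.

Definition gamma_star (R : realType) (n : nat) (gamma : 'I_n.+1 -> R) : R :=
  \sum_(j < n.+1) gamma j.

Definition c_plus (R : realType) (n : nat) (c : 'M[R]_(n, n.+1))
  (sigma : 'I_n -> R) (gamma : 'I_n.+1 -> R) : R :=
  \prod_(j < n.+1) (alpha c sigma j / alpha_plus c sigma) `^ (gamma j).

Definition Xmin (R : realType) (T : Type) (n : nat) (X : 'I_n -> T -> R)
  (w : T) : \bar R :=
  \big[Order.min/+oo%E]_(i < n) ((X i w)%:E).

(* Main.v *)
Require Import Defs.
From HB Require Import structures.
From mathcomp Require Import all_boot all_order all_algebra.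
From mathcomp Require Import all_classical all_reals all_analysis.
From mathcomp Require Import ring lra zify.
Import Order.TTheory GRing.Theory Num.Theory numFieldNormedType.Exports.
Local Open Scope classical_set_scope.
Local Open Scope ring_scope.


Lemma pow_le (R : realType) (x y : R) n : 0 <= x -> x <= y -> x ^+ n <= y ^+ n.
Proof. by move=> x0 xy; apply: lerXn2r => //; rewrite nnegrE (le_trans x0). Qed.

Lemma geo_id (R : realType) (r : R) n : (\sum_(i < n) r ^+ i) * (1 - r) = 1 - r ^+ n.
Proof.
elim: n => [|n IH]; first by rewrite big_ord0 mul0r expr0 subrr.
by rewrite big_ord_recr /= mulrDl IH exprS; ring.
Qed.

Lemma geo_le (R : realType) (r : R) n : 0 <= r < 1 -> \sum_(i < n) r ^+ i <= (1 - r)^-1.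
Proof.
move=> /andP[r0 r1]; have h : 0 < 1 - r by rewrite subr_gt0.
rewrite -[(1 - r)^-1]mul1r ler_pdivlMr // geo_id lerBlDr lerDl exprn_ge0 //.
Qed.

Section Core.
Variable R : realType.
Variables (m : nat) (g q : 'I_m -> R) (a : nat -> R).
Hypotheses (g0 : forall j, 0 <= g j) (q0 : forall j, 0 <= q j) (q1 : forall j, q j < 1).
Hypothesis a0 : a 0%N = 1.
Hypothesis arec : forall k, (0 < k)%N -> a k = k%:R^-1 * \sum_(1 <= l < k.+1)
   \sum_(j < m) g j * q j ^+ l * a (k - l)%N.

Definition S N (x : R) := \sum_(k < N) a k * x ^+ k.
Definition dS N (x : R) := \sum_(k < N) a k * k%:R * x ^+ k.-1.
Definition s l := \sum_(j < m) g j * q j ^+ l.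

Lemma s_ge0 l : 0 <= s l.
Proof. by apply: sumr_ge0 => j _; rewrite mulr_ge0 // exprn_ge0. Qed.

Lemma arec' k : (0 < k)%N -> k%:R * a k = \sum_(1 <= l < k.+1) s l * a (k - l)%N.
Proof.
move=> k0; rewrite arec // mulrA mulfV ?mul1r ?pnatr_eq0 -?lt0n //.
by apply: eq_bigr => l _; rewrite /s big_distrl.
Qed.

Lemma a_ge0 k : 0 <= a k.
Proof.
elim: k {-2}k (leqnn k) => [|n IH] k kn.
  by move: kn; rewrite leqn0 => /eqP ->; rewrite a0.
case: k kn => [|k] kn; first by rewrite a0.
rewrite arec //; apply: mulr_ge0; first by rewrite invr_ge0.
rewrite big_nat_cond; apply: sumr_ge0 => l /andP[/andP[l1 lk] _]; apply: sumr_ge0 => j _.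
by rewrite !mulr_ge0 ?exprn_ge0 // IH //; lia.
Qed.

Lemma derS N (x : R) : is_derive x (1:R) (S N) (dS N x).
Proof.
elim: N => [|N IH].
  rewrite /S /dS big_ord0; under eq_fun do rewrite big_ord0.
  exact: is_derive_cst.
have -> : S N.+1 = S N + (fun y => a N * y ^+ N).
  by apply/funext => y; rewrite /S big_ord_recr.
rewrite /dS big_ord_recr /=; apply: is_deriveD.
case: N {IH} => [|N]; first by rewrite mulr0 mul0r; under eq_fun do rewrite expr0; exact: is_derive_cst.
have -> : (fun y => a N.+1 * y ^+ N.+1) = horner (a N.+1 *: 'X^(N.+1)).
  by apply/funext=> y; rewrite hornerZ hornerXn.
apply: (is_derive_eq (is_derive_poly _ _)).
rewrite derivZ derivXn /= !hornerE.
by rewrite hornerMn hornerXn -mulrA mulr_natl.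
Qed.

Lemma dS_eq N x : dS N x = \sum_(1 <= l < N) s l * x ^+ l.-1 * S (N - l) x.
Proof.
elim: N => [|N IH]; first by rewrite /dS big_ord0 big_geq.
rewrite /dS big_ord_recr /= -/(dS N x) IH.
case: N IH => [|N] IH; first by rewrite !big_geq // mulr0 mul0r addr0.
have -> : \sum_(1 <= l < N.+2) s l * x ^+ l.-1 * S (N.+2 - l) x =
   \sum_(1 <= l < N.+2) s l * x ^+ l.-1 * S (N.+1 - l) x +
   x ^+ N * \sum_(1 <= l < N.+2) s l * a (N.+1 - l)%N.
  rewrite big_distrr -big_split /= big_nat_cond [RHS]big_nat_cond.
  apply: eq_bigr => l /andP[/andP[l1 lN] _].
  rewrite subSn // [S (N.+1 - l).+1 x]/S big_ord_recr /= -/(S (N.+1 - l) x).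
  rewrite mulrDr; congr (_ + _).
  have e : (l.-1 + (N.+1 - l) = N)%N by lia.
  rewrite -[in x ^+ N]e exprD; ring.
rewrite -(arec' N.+1 isT) [in RHS]big_nat_recr //= subnn /S big_ord0 mulr0 addr0; ring.
Qed.

Lemma S_step N x : S N.+1 x = S N x + a N * x ^+ N.
Proof. by rewrite /S big_ord_recr. Qed.

Lemma S_ge0 N x : 0 <= x -> 0 <= S N x.
Proof. by move=> x0; apply: sumr_ge0 => k _; rewrite mulr_ge0 ?a_ge0 ?exprn_ge0. Qed.

Lemma S_mono x n N : 0 <= x -> (n <= N)%N -> S n x <= S N x.
Proof.
move=> x0 nN; apply: (@homo_leq _ (fun k => S k x) (fun u v => u <= v)) => //.
- by move=> ? ? ?; exact: le_trans.
- by move=> k; rewrite S_step lerDl mulr_ge0 ?a_ge0 ?exprn_ge0.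
Qed.

Lemma S1 x : S 1 x = 1.
Proof. by rewrite /S big_ord1 expr0 mulr1 a0. Qed.

Lemma S_ge1 N x : 0 <= x -> 1 <= S N.+1 x.
Proof. by move=> x0; rewrite -(S1 x) S_mono. Qed.

Lemma term_le_S k x : 0 <= x -> a k * x ^+ k <= S k.+1 x.
Proof. by move=> x0; rewrite S_step lerDr S_ge0. Qed.

Lemma S_at0 N : S N.+1 0 = 1.
Proof.
rewrite /S big_ord_recl /= expr0 mulr1 a0 big1 ?addr0 // => i _.
by rewrite expr0n /= mulr0.
Qed.

Lemma geom1 (r x : R) N : r * x != 1 ->
  r / (1 - r * x) = \sum_(1 <= l < N.+1) r ^+ l * x ^+ l.-1 + r ^+ N.+1 * x ^+ N / (1 - r * x).
Proof.
move=> rx; have h : 1 - r * x != 0 by rewrite subr_eq0 eq_sym.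
elim: N => [|N IH]; first by rewrite big_geq // add0r expr1 expr0 mulr1.
rewrite big_nat_recr //= -addrA IH; congr (_ + _).
rewrite !exprS; field; exact: h.
Qed.

Definition hq (x : R) := \sum_(j < m) g j * (q j / (1 - q j * x)).
Definition Rt N (x : R) := \sum_(j < m) g j * (q j ^+ N.+1 * x ^+ N / (1 - q j * x)).

Lemma qx_lt1 j x : 0 <= x <= 1 -> q j * x < 1.
Proof.
move=> /andP[x0 x1]; apply: (le_lt_trans _ (q1 j)).
by rewrite -{2}(mulr1 (q j)) ler_wpM2l.
Qed.

Lemma hq_eq N x : 0 <= x <= 1 ->
  hq x = \sum_(1 <= l < N.+1) s l * x ^+ l.-1 + Rt N x.
Proof.
move=> hx; rewrite /hq /Rt.
under eq_bigr => j _ do rewrite (@geom1 _ _ N (negbT (lt_eqF (qx_lt1 j _ hx)))) mulrDr big_distrr.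
rewrite big_split /=; congr (_ + _).
rewrite exchange_big /=; apply: eq_bigr => l _.
by rewrite /s big_distrl /=; apply: eq_bigr => j _; rewrite mulrA.
Qed.

Lemma D_eq N x : 0 <= x <= 1 ->
  dS N.+1 x - S N.+1 x * hq x =
  - (\sum_(1 <= l < N.+1) s l * x ^+ l.-1 * (S N.+1 x - S (N.+1 - l) x)
     + S N.+1 x * Rt N x).
Proof.
move=> hx; rewrite dS_eq (hq_eq N _ hx) mulrDr big_distrr /=.
under [in RHS]eq_bigr => l _ do rewrite mulrBr.
rewrite sumrB; under [X in _ - (X + _)]eq_bigr => l _ do rewrite mulrC.
ring.
Qed.


Definition hh (x : R) := \sum_(j < m) g j * ln (1 - q j * x).
Definition L N (x : R) := ln (S N.+1 x) + hh x.
Definition dL N (x : R) := dS N.+1 x / S N.+1 x - hq x.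

Lemma der_lin j (x : R) : 0 <= x <= 1 ->
  is_derive x (1:R) (fun y => g j * ln (1 - q j * y)) (g j * ((1 - q j * x)^-1 * - q j)).
Proof.
move=> hx.
have -> : (fun y => g j * ln (1 - q j * y)) =
    g j *: ((@ln R) \o horner (1%:P - q j *: 'X)).
  by apply/funext => y /=; rewrite !fctE /= !hornerE.
apply: is_deriveZ; apply: is_derive1_comp.
  rewrite !hornerE; apply: is_derive1_ln; rewrite subr_gt0; exact: qx_lt1.
apply: (is_derive_eq (is_derive_poly _ _)).
by rewrite derivB derivC derivZ derivX !hornerE.
Qed.

Lemma derL N (x : R) : 0 <= x <= 1 -> is_derive x (1:R) (L N) (dL N x).
Proof.
move=> hx.
have -> : L N = ((@ln R) \o S N.+1) + \sum_(j < m) (fun y => g j * ln (1 - q j * y)).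
  by apply/funext => y; rewrite fct_sumE.
apply: (is_derive_eq (is_deriveD _ _)).
- apply: is_derive1_comp; last exact: derS.
  apply: is_derive1_ln; apply: (lt_le_trans ltr01); apply: S_ge1.
  by case/andP: hx.
- apply: is_derive_sum => j; exact: der_lin.
rewrite /dL /hq mulrC -sumrN; congr (_ + _); apply: eq_bigr => j _.
by rewrite !mulrN [_^-1 * _]mulrC.
Qed.


Lemma L0 N : L N 0 = 0.
Proof.
rewrite /L /hh S_at0 ln1 add0r big1 // => j _.
by rewrite mulr0 subr0 ln1 mulr0.
Qed.

Lemma mvtL N t : 0 < t <= 1 -> exists2 c, 0 < c < t & L N t = dL N c * t.
Proof.
move=> /andP[t0 t1].
have [c c0t eq] : exists2 c, c \in `]0, t[ & L N t - L N 0 = dL N c * (t - 0).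
  apply: MVT => //.
    move=> y; rewrite in_itv /= => /andP[y0 yt]; apply: derL.
    by rewrite (ltW y0) (le_trans (ltW yt)).
  apply: derivable_within_continuous => y; rewrite in_itv /= => /andP[y0 yt].
  apply: (@ex_derive _ _ _ _ _ _ (dL N y)); apply: derL.
  by rewrite y0 (le_trans yt).
exists c; first by move: c0t; rewrite in_itv.
by move: eq; rewrite L0 !subr0.
Qed.

Lemma Rt_ge0 N x : 0 <= x <= 1 -> 0 <= Rt N x.
Proof.
move=> hx; apply: sumr_ge0 => j _; apply: mulr_ge0 => //.
apply: divr_ge0; first by rewrite mulr_ge0 ?exprn_ge0 //; case/andP: hx.
by rewrite subr_ge0 ltW // qx_lt1.
Qed.

Lemma D_le0 N x : 0 <= x <= 1 -> dS N.+1 x - S N.+1 x * hq x <= 0.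
Proof.
move=> hx; have x0 : 0 <= x by case/andP: hx.
rewrite D_eq // oppr_le0; apply: addr_ge0.
  apply: sumr_ge0 => l _; rewrite !mulr_ge0 ?s_ge0 ?exprn_ge0 // subr_ge0.
  by apply: S_mono => //; exact: leq_subr.
by rewrite mulr_ge0 ?S_ge0 ?Rt_ge0.
Qed.

Lemma dL_eq N x : 0 <= x <= 1 -> dL N x = (dS N.+1 x - S N.+1 x * hq x) / S N.+1 x.
Proof.
move=> hx; have : 0 < S N.+1 x.
  by apply: (lt_le_trans ltr01); apply: S_ge1; case/andP: hx.
rewrite /dL => S0; field; exact: lt0r_neq0.
Qed.

Lemma upper N t : 0 < t <= 1 -> S N.+1 t <= expR (- hh t).
Proof.
move=> ht; have [c /andP[c0 ct] eq] := mvtL N t ht.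
have hc : 0 <= c <= 1 by rewrite (ltW c0) (le_trans (ltW ct)) //; case/andP: ht.
have Sp : 0 < S N.+1 t.
  by apply: (lt_le_trans ltr01); apply: S_ge1; case/andP: ht => /ltW.
have : L N t <= 0.
  rewrite eq dL_eq // mulr_le0_ge0 //; last by case/andP: ht => /ltW.
  rewrite mulr_le0_ge0 ?D_le0 // invr_ge0 S_ge0 //; exact: ltW.
rewrite /L -lerBrDr sub0r => h.
by rewrite -[X in X <= _]lnK ?ler_expR // posrE.
Qed.


Definition Qm := \big[Num.max/0]_(j < m) q j.
Lemma q_le_Qm j : q j <= Qm.
Proof. exact: le_bigmax. Qed.
Lemma Qm_ge0 : 0 <= Qm.
Proof. by rewrite /Qm; elim/big_ind: _ => // x y hx hy; rewrite le_max hx. Qed.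
Lemma Qm_lt1 : Qm < 1.
Proof. by apply: bigmax_lt => // j _; exact: q1. Qed.

Definition G := \sum_(j < m) g j.
Lemma G_ge0 : 0 <= G.
Proof. exact: sumr_ge0. Qed.

Lemma s_bound l : s l <= G * Qm ^+ l.
Proof.
rewrite /s /G big_distrl /=; apply: ler_sum => j _.
by apply: ler_wpM2l => //; apply: pow_le => //; exact: q_le_Qm.
Qed.

Lemma S_monox N c t : 0 <= c -> c <= t -> S N c <= S N t.
Proof.
move=> c0 ct; apply: ler_sum => k _; apply: ler_wpM2l; first exact: a_ge0.
exact: pow_le.
Qed.

Lemma diffS n l c : S (n + l) c - S n c = \sum_(i < l) a (n + i)%N * c ^+ (n + i).
Proof.
elim: l => [|l IH]; first by rewrite addn0 subrr big_ord0.
by rewrite addnS S_step big_ord_recr /= -IH; ring.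
Qed.

Lemma geo_le1 (r : R) n : 0 <= r < 1 -> \sum_(1 <= l < n) r ^+ l <= (1 - r)^-1.
Proof.
move=> /andP[r0 r1]; case: n => [|n]; first by rewrite big_geq // invr_ge0 subr_ge0 ltW.
rewrite big_add1 /= big_mkord.
under eq_bigr do rewrite exprS.
rewrite -big_distrr /=; apply: (@le_trans _ _ (\sum_(i < n) r ^+ i)).
  by rewrite ler_piMl ?sumr_ge0 ?ltW // => i _; rewrite exprn_ge0.
by apply: geo_le; rewrite r0.
Qed.


Section Lower.
Variable t : R.
Hypotheses (t0 : 0 < t) (t1 : t < 1).

Definition rho := (1 + Num.max Qm t) / 2.
Lemma rho_facts : (Qm < rho) /\ (t < rho) /\ (rho < 1) /\ (0 < rho).
Proof.
have h1 : Qm <= Num.max Qm t by rewrite le_max lexx.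
have h2 : t <= Num.max Qm t by rewrite le_max lexx orbT.
have h3 : Num.max Qm t < 1 by rewrite gt_max Qm_lt1 t1.
have h4 := Qm_ge0.
rewrite /rho; split; [|split; [|split]]; lra.
Qed.

Definition tp := t / rho.
Lemma tp_facts : 0 < tp /\ tp <= 1 /\ t = tp * rho.
Proof.
have [_ [tr [r1 r0]]] := rho_facts.
split; first by rewrite divr_gt0.
split; first by rewrite ler_pdivrMr // mul1r ltW.
by rewrite /tp divfK // gt_eqF.
Qed.

Definition Mp := expR (- hh tp).
Definition M := expR (- hh t).

Lemma coef_bound k c : 0 <= c <= t -> a k * c ^+ k <= Mp * rho ^+ k.
Proof.
case/andP => c0 ct; have [tp0 [tp1 tpe]] := tp_facts.
have [_ [tr [r1 r0]]] := rho_facts.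
apply: (@le_trans _ _ (a k * t ^+ k)).
  by apply: ler_wpM2l; [exact: a_ge0 | exact: pow_le].
rewrite {1}tpe exprMn mulrA; apply: ler_wpM2r; first by rewrite exprn_ge0 // ltW.
apply: (le_trans (term_le_S k tp (ltW tp0))); apply: upper.
by rewrite tp0 tp1.
Qed.

Lemma diff_bound n l c : 0 <= c <= t -> S (n + l) c - S n c <= Mp * rho ^+ n / (1 - rho).
Proof.
move=> hc; have [_ [tr [r1 r0]]] := rho_facts.
rewrite diffS; apply: (@le_trans _ _ (\sum_(i < l) Mp * rho ^+ (n + i))).
  by apply: ler_sum => i _; exact: coef_bound.
under eq_bigr do rewrite exprD mulrA.
rewrite -big_distrr /=; apply: ler_wpM2l.
  by rewrite mulr_ge0 ?expR_ge0 // exprn_ge0 // ltW.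
by apply: geo_le; rewrite ltW.
Qed.

Lemma Rt_bound N c : 0 <= c <= t -> Rt N c <= G * Qm ^+ N.+1 / (1 - Qm).
Proof.
move=> /andP[c0 ct]; have c1 : c <= 1 by rewrite (le_trans ct) // ltW.
have hc : 0 <= c <= 1 by rewrite c0 c1.
rewrite /Rt /G -mulrA big_distrl /=; apply: ler_sum => j _.
apply: ler_wpM2l => //; apply: ler_pM.
- by rewrite mulr_ge0 ?exprn_ge0.
- by rewrite invr_ge0 subr_ge0 ltW // qx_lt1.
- rewrite -[X in _ <= X]mulr1; apply: ler_pM; rewrite ?exprn_ge0 //.
    by apply: pow_le => //; exact: q_le_Qm.
  exact: exprn_ile1.
- rewrite lef_pV2 ?posrE ?subr_gt0 ?qx_lt1 ?Qm_lt1 //.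
  rewrite lerB // (le_trans _ (q_le_Qm j)) //.
  by rewrite -[X in _ <= X]mulr1 ler_wpM2l.
Qed.


Definition K := G * Mp / (1 - rho) / (1 - Qm / rho) + M * G / (1 - Qm).

Lemma negD_bound N c : 0 <= c <= t ->
  - (dS N.+1 c - S N.+1 c * hq c) <= K * rho ^+ N.+1.
Proof.
move=> hc; have /andP[c0 ct] := hc.
have c1 : c <= 1 by rewrite (le_trans ct) // ltW.
have hc1 : 0 <= c <= 1 by rewrite c0 c1.
have [Qr [tr [r1 r0]]] := rho_facts.
have Qr1 : Qm / rho < 1 by rewrite ltr_pdivrMr // mul1r.
have Qr0 : 0 <= Qm / rho by rewrite divr_ge0 ?Qm_ge0 // ltW.
rewrite D_eq // opprK /K mulrDl; apply: lerD.
- apply: (@le_trans _ _ (\sum_(1 <= l < N.+1)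
      (G * Qm ^+ l) * (Mp * rho ^+ (N.+1 - l) / (1 - rho)))).
    rewrite big_nat_cond [X in _ <= X]big_nat_cond.
    apply: ler_sum => l /andP[/andP[l1 lN] _]; apply: ler_pM.
    + by rewrite mulr_ge0 ?s_ge0 ?exprn_ge0.
    + by rewrite subr_ge0; apply: S_mono => //; exact: leq_subr.
    + apply: (@le_trans _ _ (s l)); last exact: s_bound.
      by rewrite -[X in _ <= X]mulr1 ler_wpM2l ?s_ge0 ?exprn_ile1.
    + have := diff_bound (N.+1 - l) l c hc; rewrite subnK //; exact: ltnW.
  apply: (@le_trans _ _ (G * Mp / (1 - rho) * rho ^+ N.+1 *
      \sum_(1 <= l < N.+1) (Qm / rho) ^+ l)).
    rewrite big_distrr /= big_nat_cond [X in _ <= X]big_nat_cond.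
    apply: ler_sum => l /andP[/andP[l1 lN] _]; rewrite le_eqVlt; apply/orP; left; apply/eqP.
    have e : (N.+1 = (N.+1 - l) + l)%N by rewrite subnK // ltnW.
    rewrite [in RHS]e exprD [(Qm / rho) ^+ l]exprMn exprVn; field.
    by rewrite expf_neq0 ?gt_eqF // subr_gt0.
  have -> : G * Mp / (1 - rho) / (1 - Qm / rho) * rho ^+ N.+1 =
    (G * Mp / (1 - rho) * rho ^+ N.+1) * (1 - Qm / rho)^-1 by ring.
  apply: ler_wpM2l.
    apply: mulr_ge0; last by rewrite exprn_ge0 // ltW.
    apply: divr_ge0; first by rewrite mulr_ge0 ?G_ge0 ?expR_ge0.
    by rewrite subr_ge0 ltW.
  by apply: geo_le1; rewrite Qr0.
- have SM : S N.+1 c <= M.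
    apply: (le_trans (S_monox N.+1 c t c0 ct)); apply: upper; rewrite t0 ltW //.
  have hQ : 0 < 1 - Qm by rewrite subr_gt0 Qm_lt1.
  apply: (@le_trans _ _ (M * (G * Qm ^+ N.+1 / (1 - Qm)))).
    apply: ler_pM; rewrite ?S_ge0 ?Rt_ge0 ?Rt_bound //.
  rewrite -!mulrA; apply: ler_wpM2l; first exact: expR_ge0.
  apply: ler_wpM2l; first exact: G_ge0.
  rewrite [X in _ <= X]mulrC; apply: ler_wpM2r; first by rewrite invr_ge0 ltW.
  by apply: pow_le; rewrite ?Qm_ge0 ?ltW.
Qed.


Lemma lower N : M * (1 - K * rho ^+ N.+1) <= S N.+1 t.
Proof.
have ht : 0 < t <= 1 by rewrite t0 ltW.
have [c /andP[c0 ct] eq] := mvtL N t ht.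
have hc : 0 <= c <= 1 by rewrite (ltW c0) (le_trans (ltW ct)) // ltW.
have hct : 0 <= c <= t by rewrite !ltW.
have D0 := D_le0 N c hc.
have DK : - (K * rho ^+ N.+1) <= dS N.+1 c - S N.+1 c * hq c.
  by rewrite lerNl; exact: negD_bound.
have S1 : 1 <= S N.+1 c := S_ge1 N c (ltW c0).
have Sp : 0 < S N.+1 c by apply: lt_le_trans S1.
have dLc : dS N.+1 c - S N.+1 c * hq c <= dL N c.
  rewrite dL_eq // ler_pdivlMr //.
  rewrite -[X in _ <= X]mulr1; exact: ler_wnM2l.
have dL0 : dL N c <= 0 by rewrite dL_eq // mulr_le0_ge0 // invr_ge0 ltW.
have Lb : - (K * rho ^+ N.+1) <= L N t.
  rewrite eq; apply: (le_trans DK); apply: (le_trans dLc).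
  rewrite -[X in X <= _]mulr1; apply: ler_wnM2l => //; by rewrite ltW.
have SP : 0 < S N.+1 t by apply: (lt_le_trans ltr01); apply: S_ge1; rewrite ltW.
have -> : S N.+1 t = expR (L N t) * M.
  by rewrite /M -expRD /L addrK lnK // posrE.
rewrite mulrC; apply: ler_wpM2r; first exact: expR_ge0.
by apply: le_trans (expR_ge1Dx _); rewrite lerD2l.
Qed.


Lemma core_cvg : (fun n => S n t) @ \oo --> (M : R^o).
Proof.
have [_ [_ [r1 r0]]] := rho_facts.
have h1 : (GRing.exp rho : R^nat) @ \oo --> (0 : R^o).
  by apply: cvg_expr; rewrite ger0_norm ?ltW.
have hl := cvgM (cvg_cst (M : R^o)) (cvgB (cvg_cst (1 : R^o)) (cvgM (cvg_cst (K : R^o)) h1)).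
rewrite mulr0 subr0 mulr1 in hl.
apply: (squeeze_cvgr (h := fun=> M) _ (hl _ _ _ _ _ _)); last exact: (cvg_cst (M : R^o)).
exists 1%N => // -[|n] //= _; rewrite lower /=.
apply: upper; rewrite t0 ltW //.
Qed.

End Lower.

End Core.

Lemma powR_exp (R : realType) (b s : R) : 0 < b -> b `^ s = expR (s * ln b).
Proof. by move=> b0; rewrite /powR gt_eqF. Qed.

Theorem theorem2p4 (R : realType) (d : measure_display) (T : measurableType d)
  (P : probability T R) (n : nat) (c : 'M[R]_(n, n.+1))
  (sigma : 'I_n -> R) (gamma : 'I_n.+1 -> R)
  (X : 'I_n -> {RV P >-> R}) (delta : nat -> R) :
  (forall i j, c i j = 0 \/ c i j = 1) ->
  (forall i, exists j, c i j = 1) ->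
  (forall j, exists i, c i j = 1) ->
  (forall i, 0 < sigma i) ->
  (forall j, 0 < gamma j) ->
  1 < gamma_star gamma ->
  (forall x : 'I_n -> R, (forall i, 0 < x i) ->
     P [set w | forall i, x i < X i w] =
     (\prod_(j < n.+1) (1 + \sum_(i < n) c i j / sigma i * x i) `^ (- gamma j))%:E) ->
  delta 0%N = 1 ->
  (forall k : nat, (0 < k)%N ->
     delta k = k%:R^-1 * \sum_(1 <= l < k.+1) \sum_(j < n.+1)
        gamma j * (1 - alpha c sigma j / alpha_plus c sigma) ^+ l * delta (k - l)%N) ->
  forall x : R, 0 < x ->
    P [set w | (x%:E < Xmin (fun i => (X i : T -> R)) w)%E] =
    (\sum_(0 <= k <oo)
       ((c_plus c sigma gamma * delta k) *
        (1 + x / alpha_plus c sigma) `^ (- (gamma_star gamma + k%:R)))%:E)%E.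
Proof.
move=> c01 crow ccol sig0 gam0 G1 hP d0 drec x x0.
have sum_pos : forall j, 0 < \sum_(i < n) c i j / sigma i.
  move=> j; have [i ci] := ccol j.
  rewrite (bigD1 i) //= ci mul1r.
  have h1 : 0 < (sigma i)^-1 by rewrite invr_gt0.
  have h2 : 0 <= \sum_(k < n | k != i) c k j / sigma k.
    apply: sumr_ge0 => k _; apply: divr_ge0; last exact: ltW.
    by case: (c01 k j) => ->.
  lra.
have al0 : forall j, 0 < alpha c sigma j by move=> j; rewrite /alpha invr_gt0.
have alap : forall j, alpha c sigma j <= alpha_plus c sigma.
  by move=> j; exact: le_bigmax.
set ap := alpha_plus c sigma in alap drec *.
have ap0 : 0 < ap by apply: lt_le_trans (al0 ord0) (alap ord0).
pose q := fun j => 1 - alpha c sigma j / ap.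
have r0 : forall j, 0 < alpha c sigma j / ap by move=> j; rewrite divr_gt0.
have q0 : forall j, 0 <= q j by move=> j; rewrite subr_ge0 ler_pdivrMr // mul1r.
have q1 : forall j, q j < 1 by move=> j; have := r0 j; rewrite /q; lra.
set y := 1 + x / ap.
have y1 : 1 < y by rewrite /y ltrDl divr_gt0.
have y0 : 0 < y by lra.
set t := y^-1.
have t0 : 0 < t by rewrite invr_gt0.
have t1 : t < 1 by rewrite invf_lt1.
have hcvg := @core_cvg R n.+1 gamma q delta
  (fun j => ltW (gam0 j)) q0 q1 d0 drec t t0 t1.
have -> : [set w | (x%:E < Xmin (fun i => (X i : T -> R)) w)%E] =
    [set w | forall i, (fun=> x) i < X i w].
  apply/seteqP; split => w /=; rewrite /Xmin.
  - by move/bigmin_gtP => [_ h] i; rewrite -lte_fin; exact: h.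
  - move=> h; apply/bigmin_gtP; split; first exact: ltry.
    by move=> i _; rewrite lte_fin; exact: h.
rewrite hP //=.
set C := c_plus c sigma gamma * expR (- (gamma_star gamma * ln y)).
have hB : forall k, c_plus c sigma gamma * delta k * y `^ (- (gamma_star gamma + k%:R))
    = C * (delta k * t ^+ k).
  move=> k; rewrite powR_exp // opprD mulrDl expRD !mulNr -[- (k%:R * _)]mulrN.
  rewrite expRM_natl [expR (- ln y)]expRN lnK ?posrE // /C -/t; ring.
have qt1 : forall j, 0 < 1 - q j * t.
  move=> j; rewrite subr_gt0 (le_lt_trans _ t1) // ler_piMl // ?ltW //.
have lnbase : forall j, ln (1 + \sum_(i < n) c i j / sigma i * x) =
    - ln (alpha c sigma j / ap) + ln y + ln (1 - q j * t).
  move=> j.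
  have e : 1 + \sum_(i < n) c i j / sigma i * x =
      (alpha c sigma j / ap)^-1 * y * (1 - q j * t).
    have s0 := sum_pos j.
    rewrite -big_distrl /= /q /t /y /alpha.
    set s := \sum_(i < n) c i j / sigma i.
    field; rewrite ?gt_eqF // ?invr_gt0 //.
    by rewrite addr_gt0.
  have h1 : (alpha c sigma j / ap)^-1 * y \is Num.pos by rewrite posrE mulr_gt0 ?invr_gt0.
  have hA : alpha c sigma j / ap \is Num.pos by rewrite posrE.
  have hAi : (alpha c sigma j / ap)^-1 \is Num.pos by rewrite posrE invr_gt0.
  have hy : y \is Num.pos by rewrite posrE.
  by rewrite e (lnM h1) ?posrE // (lnM hAi hy) (lnV hA).
have hA : \prod_(j < n.+1) (1 + \sum_(i < n) c i j / sigma i * x) `^ (- gamma j) =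
    C * M R n.+1 gamma q t.
  have bpos : forall j, 0 < 1 + \sum_(i < n) c i j / sigma i * x.
    move=> j; rewrite -big_distrl /= addr_gt0 // mulr_gt0 //.
  rewrite (eq_bigr (fun j => expR (- gamma j * ln (1 + \sum_(i < n) c i j / sigma i * x))));
    last by move=> j _; rewrite powR_exp.
  have cpE : c_plus c sigma gamma = \prod_(j < n.+1) expR (gamma j * ln (alpha c sigma j / ap)).
    by apply: eq_bigr => j _; rewrite powR_exp.
  rewrite /C cpE.
  rewrite /M -!expR_sum -!expRD; congr expR.
  rewrite /gamma_star /hh mulr_suml -!sumrN -!big_split /=; apply: eq_bigr => j _.
  rewrite lnbase; ring.
rewrite hA.
have eqF : (fun N => (\sum_(0 <= k < N) (c_plus c sigma gamma * delta k *
      y `^ (- (gamma_star gamma + k%:R)))%:E)%E) =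
    EFin \o (fun N => C * S R delta N t).
  apply/funext => N /=; rewrite sumEFin big_mkord /S big_distrr; congr EFin.
  by apply: eq_bigr => k _; rewrite hB.
have hc : (fun N => C * S R delta N t) @ \oo --> C * M R n.+1 gamma q t.
  exact: (cvgM (cvg_cst C) hcvg).
rewrite eqF EFin_lim; last first.
  by apply: (cvgP (C * M R n.+1 gamma q t)).
congr EFin; apply/esym/cvg_lim => //; exact: hc.
Qed.
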